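(* Let $p,q\ge2$ be coprime, $f=x^p+y^q$, $G=\mathbb{Z}/pq\mathbb{Z}=\langle\Lambda\rangle$ with $\rho(\Lambda)=\mathrm{diag}(e^{2\pi i/p},e^{2\pi i/q})$, $j=\Lambda$, and $\sigma\equiv0$. Then the $\check\varphi$-invariant subspace of $\check{GM_f}$ has dimension $(p-1)(q-1)$ and is spanned by the elements $\check1_{\Lambda^i}$, $i\in\{0,\dots,pq-1\}$, with $i-1\not\equiv0\pmod p$ and $i-1\not\equiv0\pmod q$. For such $i$ write $i\equiv u\pmod p$ with $u\in\{2,\dots,p\}$ and $i\equiv v\pmod q$ with $v\in\{2,\dots,q\}$; then the map $\check1_{\Lambda^i}\mapsto x^{p-u}y^{q-v}$ is a bijection onto the monomial basis $\{x^ay^b:0\le a\le p-2,\ 0\le b\le q-2\}$ of $M_f$, and the dual bi-degree of $\check 1_{\Lambda^i}$ is $(-\deg(x^{p-u}y^{q-v}),\ \deg(x^{p-u}y^{q-v}))$ with $\deg x=\frac1p$, $\deg y=\frac1q$. In particular the invariants of the dual are isomorphic as a bi-graded vector space to the $(a,c)$ realization of $M_f$ (for $(p,q)=(3,4)$ this is $E_6$, for $(3,5)$ it is $E_8$).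
   Context: Standing setup. For quasi-homogeneous $f$ with weights $q_i\in(0,1)$, $d=\sum_i(1-2q_i)$, a finite abelian group $G$ acting diagonally via $\rho$ leaving $f$ invariant, $\rho(g)=\mathrm{diag}(e^{2\pi i\nu_i(g)})$, $\nu_i(g)\in[0,1)$: $\mathrm{Fix}(g)$ is spanned by the coordinates with $\nu_i(g)=0$, $A_g=M_{f|_{\mathrm{Fix}(g)}}$ ($=\mathbb{C}$ if $\mathrm{Fix}(g)=0$) with elements $a1_g$; for $\sigma\in\mathrm{Hom}(G,\mathbb{Z}/2\mathbb{Z})$, $\varphi(h)(a1_g)=(-1)^{\sigma(h)\sigma(g)}\det(\rho(h))^{-1}\det(\rho(h)|_{\mathrm{Fix}(g)})\,a(\rho(h)z)\,1_g$, $\chi(h)=(-1)^{\sigma(h)}\det\rho(h)$. Let $j\in G$ satisfy $\rho(j)=\mathrm{diag}(e^{2\pi iq_i})$. Dual: $\check A_g:=A_{gj^{-1}}$; $a\check1_g$ denotes $a1_{gj^{-1}}$ viewed in $\check A_g$; $\check\varphi(h)(a\check1_g)=\chi(h)\varphi(h)(a1_{gj^{-1}})$ viewed in $\check A_g$. Shifts $s_g=\sum_{i:\nu_i(g)\ne0}(\nu_i(g)-q_i)$, $\bar s_g=\sum_{i:\nu_i(g)\ne0}(1-\nu_i(g)-q_i)$; the dual bi-degree of $a\check1_g$ is $(\deg a+s_{gj^{-1}}-d,\ \deg a+\bar s_{gj^{-1}})$. *)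

(* Defs.v *)
(* Coordinates are indexed by 'I_2 (0 = x, 1 = y). *)
From HB Require Import structures.
From mathcomp Require Import all_boot all_order all_algebra all_field.
Unset Printing Implicit Defensive.
Import Order.TTheory GRing.Theory Num.Theory.
Local Open Scope ring_scope.

Section FermatTwo.
Variables p q : nat.

Definition ex (i : 'I_2) : nat := if val i == 0%N then p else q.

Definition wt (i : 'I_2) : rat := ((ex i)%:R)^-1.

Definition dd : rat := \sum_(i < 2) (1 - 2%:R * wt i).

(* e^{2 pi i / n} in algC: n.-root (-1) has argument pi/n *)
Definition zeta (n : nat) : algC := (n.-root (-1)) ^+ 2.

(* group elements: k : nat stands for Lambda^k (only k mod pq matters) *)
Definition rho (k : nat) : 'M[algC]_2 := diag_mx (\row_(i < 2) zeta (ex i) ^+ k).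

Definition nu (k : nat) (i : 'I_2) : rat := ((k %% ex i)%:R) / ((ex i)%:R).

(* coordinate i spans Fix(Lambda^k) iff nu_i = 0 *)
Definition fixedb (k : nat) (i : 'I_2) : bool := nu k i == 0.

Definition sh (k : nat) : rat := \sum_(i < 2 | nu k i != 0) (nu k i - wt i).
Definition shbar (k : nat) : rat := \sum_(i < 2 | nu k i != 0) (1 - nu k i - wt i).

(* A_{Lambda^k} = M_{f|Fix(Lambda^k)}: f|Fix = sum_{i fixed} x_i^{ex i}, whose Milnor
   ring C[x_i : i fixed]/(x_i^{ex i - 1}) has monomial basis prod_i x_i^{a_i} with
   a_i < ex i - 1 for fixed i and a_i = 0 for non-fixed i (so A = C if Fix = 0).
   mon_ok k a b <=> x^a y^b is a basis monomial of A_{Lambda^k}. *)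
Definition mon_ok (k : nat) (a b : nat) : bool :=
  (if fixedb k 0 then (a < (p.-1))%N else a == 0%N) &&
  (if fixedb k 1 then (b < (q.-1))%N else b == 0%N).

Definition gjinv (k : nat) : nat := ((k + p * q).-1 %% (p * q))%N.

(* index of basis of the dual: (g, (a, b)) stands for x^a y^b \check 1_g,
   an element of \check A_g = A_{g j^{-1}} *)
Definition dual_idx := {t : 'I_(p * q) * ('I_p * 'I_q) |
  mon_ok (gjinv t.1) t.2.1 t.2.2}.
HB.instance Definition _ := Finite.on dual_idx.

Definition DualSp := {ffun dual_idx -> algC^o}.

Definition dsector (t : dual_idx) : nat := val (val t).1.
Definition da (t : dual_idx) : nat := val (val t).2.1.
Definition db (t : dual_idx) : nat := val (val t).2.2.

Definition bvec (t : dual_idx) : DualSp := [ffun s => ((s == t)%:R : algC)].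

(* the action: h = Lambda^m, sigma : G -> Z/2 given as a bool-valued function *)
Definition detFix (m k : nat) : algC := \prod_(i < 2 | fixedb k i) rho m i i.

(* a(rho(h) z) for the monomial a = x^a y^b, as a multiple of x^a y^b *)
Definition monact (m a b : nat) : algC := (rho m 0 0) ^+ a * (rho m 1 1) ^+ b.

Definition phi_coef (sigma : 'I_(p * q) -> bool) (h : 'I_(p * q)) (k : 'I_(p * q)) (a b : nat)
  : algC :=
  (-1) ^+ (sigma h && sigma k) * (\det (rho h))^-1 * detFix h k * monact h a b.

Definition chi (sigma : 'I_(p * q) -> bool) (h : 'I_(p * q)) : algC :=
  (-1) ^+ sigma h * \det (rho h).

Lemma gjinv_lt (k : nat) : (0 < p * q)%N -> (gjinv k < p * q)%N.
Proof. by move=> H; rewrite /gjinv ltn_mod. Qed.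

(* g j^{-1} as a group element of 'I_(p*q) (for p*q > 0; junk otherwise) *)
Definition gjinvG (k : 'I_(p * q)) : 'I_(p * q).
Proof.
  case: (ltnP 0 (p * q)) => H.
  - exact: (Ordinal (gjinv_lt k H)).
  - exact: k.
Defined.

(* \check phi(h)(a \check 1_g) = chi(h) phi(h)(a 1_{g j^{-1}}) *)
Definition phicheck_fun (sigma : 'I_(p * q) -> bool) (h : 'I_(p * q)) (v : DualSp)
  : DualSp :=
  [ffun t => chi sigma h * phi_coef sigma h (gjinvG (val t).1) (da t) (db t) * v t].

Definition phicheck (sigma : 'I_(p * q) -> bool) (h : 'I_(p * q)) : 'End(DualSp) :=
  linfun (phicheck_fun sigma h).

Definition InvSp (sigma : 'I_(p * q) -> bool) : {vspace DualSp} :=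
  (\bigcap_(h : 'I_(p * q)) lker (phicheck sigma h - \1)%VF)%VS.

Definition mdeg (a b : nat) : rat := a%:R * wt 0 + b%:R * wt 1.
Definition dual_bideg (t : dual_idx) : rat * rat :=
  (mdeg (da t) (db t) + sh (gjinv (dsector t)) - dd,
   mdeg (da t) (db t) + shbar (gjinv (dsector t))).

Definition good (i : nat) : bool :=
  ~~ (p%:Z %| i%:Z - 1)%Z && ~~ (q%:Z %| i%:Z - 1)%Z.

(* u in {2,...,p} (resp. v in {2,...,q}) with i = u mod p (resp. i = v mod q),
   for good i *)
Definition uu (i : nat) : nat := ((i + p - 2) %% p + 2)%N.
Definition vv (i : nat) : nat := ((i + q - 2) %% q + 2)%N.

Definition one_good (t : dual_idx) : bool :=
  [&& good (dsector t), da t == 0%N & db t == 0%N].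

End FermatTwo.

(* Main.v *)
Require Import Defs.
From HB Require Import structures.
From mathcomp Require Import all_boot all_order all_algebra all_field.
From mathcomp Require Import ring lra zify.
Import Order.TTheory GRing.Theory Num.Theory.
Local Open Scope ring_scope.

Lemma algR_leE (a b : algR) : (a <= b) = (algRval a <= algRval b).
Proof. by []. Qed.

Lemma norm1_pow {z c : algC} {n} : (0 < n)%N -> z ^+ n = c -> `|c| = 1 -> `|z| = 1.
Proof.
move=> n0 zc c1; apply/eqP; rewrite -(pexpr_eq1 n0) // -normrX zc c1 //.
Qed.

Lemma ReIm1 {z : algC} : `|z| = 1 -> 'Re z ^+ 2 + 'Im z ^+ 2 = 1.
Proof. by move=> h; rewrite -normC2_Re_Im h expr1n. Qed.

Lemma root_max {n} {y : algC} : (1 < n)%N -> y ^+ n = -1 -> 'Re y <= 'Re (n.-root (-1)).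
Proof.
move=> n1 yn; have n0 : (0 < n)%N by apply: ltnW.
have [hI|hI] := real_ge0P (Creal_Im y); first exact: rootC_Re_max.
rewrite -Re_conj; apply: rootC_Re_max => //.
  by rewrite -rmorphXn yn rmorphN1.
by rewrite Im_conj oppr_ge0 ltW.
Qed.
Lemma key_real (R : realFieldType) (x y x0 y0 : R) :
  x0^+2 + y0^+2 = 1 -> x^+2 + y^+2 = 1 -> 0 < y0 ->
  x * (x0^+2 - y0^+2) - y * (2 * x0 * y0) <= x ->
  x * (x0^+2 - y0^+2) + y * (2 * x0 * y0) <= x -> x <= x0 -> x = x0.
Proof.
move=> h0 h1 hy0.
have hA : x * (x0^+2 - y0^+2) = x - 2 * (x * y0 * y0).
  have e : x0^+2 = 1 - y0^+2 by lra.
  by rewrite e; ring.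
have hB : y * (2 * x0 * y0) = 2 * (x0 * y * y0) by ring.
rewrite hA hB => h2 h3 h4.
have e1 : 0 <= x * y0 * y0 by lra.
have hx : 0 <= x.
  by move: e1; rewrite -mulrA pmulr_lge0 // mulr_gt0.
have h5 : x0 * y <= x * y0 by rewrite -(ler_pM2r hy0); lra.
have h6 : - (x0 * y) <= x * y0 by rewrite -(ler_pM2r hy0); lra.
have h7 : x0^+2 * y^+2 <= x^+2 * y0^+2 by nra.
have h8 : x0^+2 <= x^+2 by nra.
nra.
Qed.

Definition Rr (z : algC) : algR := in_algR (Creal_Re z).
Definition Ii (z : algC) : algR := in_algR (Creal_Im z).

Lemma Rr_eq1 {z : algC} : `|z| = 1 -> Rr z ^+ 2 + Ii z ^+ 2 = 1.
Proof. by move=> h; apply: val_inj => /=; rewrite -!expr2 ReIm1. Qed.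

Lemma zeta_prim_aux n : (1 < n)%N ->
  exists2 eps : algC, n.-primitive_root eps & exists m, eps * ((n.-root (-1)) ^+ 2) ^+ m = 1.
Proof.
move=> n1; have n0 : (0 < n)%N by apply: ltnW.
set w := n.-root (-1).
have wn : w ^+ n = -1 by rewrite /w rootCK.
have w1 : `|w| = 1 by apply: (norm1_pow n0 wn); rewrite normrN1.
have [eps peps] := C_prim_root_exists n0.
exists eps => //.
have en : eps ^+ n = 1 := prim_expr_order peps.
have e1 : `|eps| = 1 by apply: (norm1_pow n0 en); rewrite normr1.
have Imw0 : 0 <= 'Im w by apply: Im_rootC_ge0.
have two0 : (2 : algC) != 0 by rewrite pnatr_eq0.
have Imw : 0 < 'Im w.
  rewrite lt_def Imw0 andbT; apply/negP => /eqP I0.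
  have wR : w = 'Re w by rewrite {1}[w]Crect I0 mulr0 addr0.
  have := ReIm1 w1; rewrite I0 expr0n /= addr0 => /eqP; rewrite sqrf_eq1 => /orP[] /eqP R1.
    move: wn; rewrite wR R1 expr1n => /eqP; rewrite -subr_eq0 opprK.
    by rewrite (negPf two0).
  have yn : (- eps) ^+ n = -1.
    by rewrite exprNn en mulr1; move: wn; rewrite wR R1.
  have := root_max n1 yn; rewrite -/w R1 raddfN /= lerN2 => Re1.
  have hR : Rr eps = 1 /\ Ii eps = 0.
    have h := Rr_eq1 e1.
    have h2 : 1 <= Rr eps by rewrite algR_leE /= ?rmorph1.
    split; nra.
  have epsE : eps = 1.
    rewrite [eps]Crect.
    have -> : 'Re eps = 1 by case: hR => /(congr1 algRval) /= -> _; rewrite ?rmorph1.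
    have -> : 'Im eps = 0 by case: hR => _ /(congr1 algRval) /= ->; rewrite ?rmorph0.
    by rewrite mulr0 addr0.
  have := prim_order_dvd peps 1; rewrite epsE expr1n eqxx dvdn1 => /eqP nE.
  by rewrite nE in n1.
set u := w ^+ 2.
have un : u ^+ n = 1 by rewrite /u -exprM mulnC exprM wn sqrrN expr1n.
have u1 : `|u| = 1 by rewrite normrX w1 expr1n.
have uc : u^* = u ^+ n.-1.
  have h : u^* * u = 1 by rewrite -normCKC u1 expr1n.
  by rewrite -[u^*]mulr1 -un -(prednK n0) exprS mulrA h mul1r.
have uE : u = w ^+ 2 by [].
clearbody u.
pose F (k : 'I_n) := Rr (w * eps * u ^+ k).
case: (@arg_maxP _ _ 'I_n (Ordinal n0) predT F isT) => k _ Hk.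
have Hall : forall m : nat, 'Re (w * eps * u ^+ m) <= 'Re (w * eps * u ^+ k).
  move=> m; have := Hk (Ordinal (ltn_pmod m n0)) isT.
  move=> H; have : F (Ordinal (ltn_pmod m n0)) <= F k := H. by rewrite algR_leE /= (expr_mod m un).
set t := w * eps * u ^+ k.
have tn : t ^+ n = -1.
  by rewrite /t !exprMn wn en exprAC un expr1n !mulr1.
have t1 : `|t| = 1 by apply: (norm1_pow n0 tn); rewrite normrN1.
have h2 : 'Re (t * u) <= 'Re t.
  by have := Hall k.+1; rewrite exprSr mulrA.
have h3 : 'Re (t * u^* ) <= 'Re t.
  by have := Hall (k + n.-1)%N; rewrite uc exprD mulrA.
have h4 : 'Re t <= 'Re w by apply: root_max n1 tn.
have ReU : 'Re u = 'Re w * 'Re w - 'Im w * 'Im w by rewrite uE expr2 ReM.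
have ImU : 'Im u = (1 + 1) * 'Re w * 'Im w by rewrite uE expr2 ImM; ring.
have h2c : 'Re t * ('Re w * 'Re w - 'Im w * 'Im w) - 'Im t * ((1 + 1) * 'Re w * 'Im w) <= 'Re t.
  by move: h2; rewrite ReM ReU ImU.
have h3c : 'Re t * ('Re w * 'Re w - 'Im w * 'Im w) + 'Im t * ((1 + 1) * 'Re w * 'Im w) <= 'Re t.
  by move: h3; rewrite ReM Re_conj Im_conj ReU ImU mulrN opprK.
have h2R : Rr t * (Rr w ^+2 - Ii w ^+ 2) - Ii t * (2 * Rr w * Ii w) <= Rr t := h2c.
have h3R : Rr t * (Rr w ^+2 - Ii w ^+ 2) + Ii t * (2 * Rr w * Ii w) <= Rr t := h3c.
have h4R : Rr t <= Rr w := h4.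
have ImR : 0 < Ii w := Imw.
have := @key_real _ _ _ _ _ (Rr_eq1 w1) (Rr_eq1 t1) ImR h2R h3R h4R.
move=> /(congr1 algRval) /= ReE.
have : 'Im t ^+ 2 = 'Im w ^+ 2.
  by have := ReIm1 t1; rewrite ReE -(ReIm1 w1) => /addrI.
move=> /eqP; rewrite eqf_sqr => /orP[] /eqP ImE.
  exists k; apply: (mulfI (x := w)).
    by rewrite -normr_eq0 w1 oner_eq0.
  by rewrite mulr1 mulrA -/t [t]Crect ReE ImE -Crect.
exists k.+1.
have tE : t = w^* by rewrite [t]Crect ReE ImE [w^*]Crect Re_conj Im_conj.
have : w * t = 1 by rewrite tE -normCK w1 expr1n.
move=> H; rewrite -H /t exprS {1}uE expr2; ring.
Qed.

Lemma phicheck_lin p q sigma h : linear (phicheck_fun p q sigma h).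
Proof.
move=> a u v; apply/ffunP => t; rewrite !ffunE.
rewrite /GRing.scale /=.
set c := chi p q sigma h * _; rewrite mulrDr mulrCA.
by [].
Qed.

HB.instance Definition _ p q sigma h :=
  GRing.isLinear.Build algC (DualSp p q) (DualSp p q) _ (phicheck_fun p q sigma h)
   (phicheck_lin p q sigma h).

Lemma phicheckE p q sigma h v : phicheck p q sigma h v = phicheck_fun p q sigma h v.
Proof. by rewrite /phicheck lfunE. Qed.


Lemma zeta_dvd n a : (1 < n)%N -> (zeta n ^+ a == 1) = (n %| a)%N.
Proof.
move=> n1; have n0 : (0 < n)%N by apply: ltnW.
have zn : zeta n ^+ n = 1.
  by rewrite /zeta -exprM mulnC exprM rootCK // sqrrN expr1n.
have [eps peps [m hm]] := zeta_prim_aux _ n1.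
rewrite -/(zeta n) in hm.
apply/idP/idP => [/eqP za|/dvdnP [c ->]]; last by rewrite mulnC exprM zn expr1n.
rewrite (prim_order_dvd peps); apply/eqP.
have := congr1 (fun x => x ^+ a) hm; rewrite exprMn expr1n -exprM mulnC exprM za expr1n mulr1.
by [].
Qed.

Lemma zeta_neq0 n : (1 < n)%N -> zeta n != 0.
Proof.
move=> n1; apply/eqP => z0; have := zeta_dvd n n n1.
by rewrite z0 expr0n gtn_eqF ?(ltnW n1) //= eq_sym oner_eq0 dvdnn.
Qed.

Lemma dvd_aux (d g M : nat) : (d %| M)%N -> (0 < M)%N ->
  (d%:Z %| g%:Z - 1)%Z = (d %| (g + M).-1)%N.
Proof.
move=> dM M0.
have -> : (d %| (g + M).-1)%N = (d%:Z %| ((g + M).-1)%:Z)%Z by [].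
rewrite predn_int ?addn_gt0 ?M0 ?orbT // PoszD addrAC.
by rewrite [in RHS]rpredDr.
Qed.

Section Basics.
Variables p q : nat.
Hypotheses (hp : (2 <= p)%N) (hq : (2 <= q)%N) (cop : coprime p q).

Let p0 : (0 < p)%N. Proof. by apply: leq_trans hp. Qed.
Let q0 : (0 < q)%N. Proof. by apply: leq_trans hq. Qed.
Let pq0 : (0 < p * q)%N. Proof. by rewrite muln_gt0 p0 q0. Qed.

Lemma ex_gt0 i : (0 < ex p q i)%N.
Proof. by rewrite /ex; case: ifP. Qed.

Lemma fixedbE k i : fixedb p q k i = (ex p q i %| k)%N.
Proof.
rewrite /fixedb /nu mulf_eq0 invr_eq0 !pnatr_eq0.
by rewrite (negPf (lt0n_neq0 (ex_gt0 i))) orbF.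
Qed.

Lemma fixed0 k : fixedb p q k 0 = (p %| k)%N. Proof. by rewrite fixedbE. Qed.
Lemma fixed1 k : fixedb p q k 1 = (q %| k)%N. Proof. by rewrite fixedbE. Qed.

Lemma rhoE m i : rho p q m i i = zeta (ex p q i) ^+ m.
Proof. by rewrite /rho !mxE eqxx mulr1n. Qed.

Lemma detFixE m k : detFix p q m k =
  (if (p %| k)%N then zeta p ^+ m else 1) * (if (q %| k)%N then zeta q ^+ m else 1).
Proof.
rewrite /detFix big_mkcond !big_ord_recl big_ord0 /= mulr1.
by rewrite !fixedbE !rhoE /ex /=.
Qed.

Lemma monactE m a b : monact p q m a b = zeta p ^+ (m * a) * zeta q ^+ (m * b).
Proof. by rewrite /monact !rhoE !exprM. Qed.

Lemma gjinvGE (g : 'I_(p * q)) : val (gjinvG p q g) = gjinv p q g.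
Proof.
rewrite /gjinvG; case: ltnP => // H.
by move: pq0; rewrite ltnNge H.
Qed.


Lemma det_rho_neq0 m : \det (rho p q m) != 0.
Proof.
rewrite /rho det_diag; apply/prodf_neq0 => i _; rewrite mxE expf_neq0 //.
by apply: zeta_neq0; rewrite /ex; case: ifP.
Qed.

Definition sigma0 : 'I_(p * q) -> bool := fun _ => false.

Lemma coefE h g a b : chi p q sigma0 h * phi_coef p q sigma0 h g a b =
  detFix p q h g * monact p q h a b.
Proof.
rewrite /chi /phi_coef /sigma0 /= !expr0 !mul1r !mulrA mulfV ?mul1r //.
exact: det_rho_neq0.
Qed.

End Basics.

Definition evf (p q : nat) (t : dual_idx p q) (v : DualSp p q) : algC^o := v t.
Lemma evf_lin p q t : linear (evf p q t).
Proof. by move=> a u v; rewrite /evf !ffunE. Qed.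
HB.instance Definition _ p q t :=
  GRing.isLinear.Build algC (DualSp p q) algC^o _ (evf p q t) (evf_lin p q t).

Section NatGen.
Local Open Scope nat_scope.
Definition uval (n i : nat) : nat := if i %% n == 0 then n else i %% n.

Lemma uu_gen n i : 1 < n -> i %% n != 1 -> (i + n - 2) %% n + 2 = uval n i.
Proof.
move=> n1 ni; rewrite /uval -addnBA // -modnDml.
have rn : i %% n < n by rewrite ltn_mod; lia.
move: ni rn; case: (i %% n) => [|[|r]] //= _ rn.
  by rewrite add0n modn_small ?subnK //; lia.
have -> : r.+2 + (n - 2) = r + n by lia.
by rewrite modnDr modn_small //; lia.
Qed.

Lemma uval_prop n i : 1 < n -> i %% n != 1 ->
  [/\ 2 <= uval n i <= n, uval n i = i %[mod n] & 0 < uval n i].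
Proof.
move=> n1 ni; rewrite /uval.
have rn : i %% n < n by rewrite ltn_mod; lia.
case: eqP => [->|r0]; first by rewrite modnn; split => //; lia.
split; [|by rewrite modn_mod | lia].
by apply/andP; split; lia.
Qed.

Lemma predmod n m : 1 < n -> 0 < m -> m %% n != 1 -> (m.-1 %% n).+1 = uval n m.
Proof.
move=> n1 m0 mn; rewrite /uval.
have : m = m.-1.+1 by rewrite prednK.
set x := m.-1 => mE.
have hx := divn_eq x n.
have sn : x %% n < n by rewrite ltn_mod; lia.
have key : m %% n = (x %% n).+1 %% n.
  by rewrite mE -addn1 -modnDml addn1.
rewrite key.
case: (ltngtP (x %% n).+1 n) => [lt|gt|eq].
- by rewrite (modn_small lt).
- lia.
- by rewrite eq modnn eqxx.
Qed.

Lemma uval_inj_lt n i : 0 < n -> uval n i <= n. 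
Proof. move=> n0; rewrite /uval; case: eqP => // _; apply: ltnW; rewrite ltn_mod. done. Qed.

End NatGen.


Lemma uval_mod n i j : (i %% n = j %% n)%N -> uval n i = uval n j.
Proof. by rewrite /uval => ->. Qed.

Lemma target n a : (1 < n)%N -> (a < n.-1)%N ->
  ((n - a) %% n != 1)%N /\ uval n (n - a) = (n - a)%N.
Proof.
move=> n1 ha; case: a ha => [|a] ha.
  by rewrite subn0 /uval modnn eqxx.
have lt : (n - a.+1 < n)%N by lia.
rewrite /uval modn_small //; split; first by apply/eqP; lia.
by case: eqP => // e; lia.
Qed.

Section S2.
Variables p q : nat.
Hypotheses (hp : (2 <= p)%N) (hq : (2 <= q)%N) (cop : coprime p q).
Let p0 : (0 < p)%N. Proof. by apply: leq_trans hp. Qed.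
Let q0 : (0 < q)%N. Proof. by apply: leq_trans hq. Qed.
Let pq0 : (0 < p * q)%N. Proof. by rewrite muln_gt0 p0 q0. Qed.

Lemma pq1 : (1 < p * q)%N.
Proof. by have := leq_mul hp q0; rewrite muln1. Qed.

Let fixed0 := @fixed0 p q hp hq.
Let fixed1 := @fixed1 p q hp hq.
Let detFixE := @detFixE p q hp hq.
Let gjinvGE := @gjinvGE p q hp hq.
Let coefE := @coefE p q hp hq.
Let sigma0 := sigma0 p q.

Lemma good_gjinv g : good p q g = ~~ (p %| gjinv p q g)%N && ~~ (q %| gjinv p q g)%N.
Proof.
rewrite /good (dvd_aux p g (p * q) (dvdn_mulr q (dvdnn p)) pq0).
rewrite (dvd_aux q g (p * q) (dvdn_mull p (dvdnn q)) pq0) /gjinv /dvdn.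
rewrite !modn_dvdm //; first by apply: dvdn_mull.
by apply: dvdn_mulr.
Qed.

Definition cf (h : nat) (t : dual_idx p q) : algC :=
  detFix p q h (gjinv p q (dsector p q t)) * monact p q h (da p q t) (db p q t).

Lemma phicheck_funE (h : 'I_(p * q)) v t : phicheck_fun p q sigma0 h v t = cf h t * v t.
Proof. by rewrite ffunE coefE gjinvGE. Qed.

Lemma cf_good h t : one_good p q t -> cf h t = 1.
Proof.
case/and3P => g /eqP a0 /eqP b0; move: g; rewrite good_gjinv => /andP [np nq].
by rewrite /cf detFixE monactE a0 b0 (negPf np) (negPf nq) !muln0 !expr0 !mulr1.
Qed.

Lemma cf_bad t : ~~ one_good p q t -> cf 1 t != 1.
Proof.
have mk : mon_ok p q (gjinv p q (dsector p q t)) (da p q t) (db p q t) := valP t.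
move: mk; rewrite /mon_ok fixed0 fixed1 /one_good good_gjinv.
set k := gjinv p q _; set a := da p q t; set b := db p q t.
move=> /andP [ha hb] nog; apply/negP => /eqP c1.
pose al := ((p %| k)%N + a)%N; pose be := ((q %| k)%N + b)%N.
have cE : cf 1 t = zeta p ^+ al * zeta q ^+ be.
  rewrite /cf detFixE monactE !mul1n /al /be !exprD.
  by case: (p %| k)%N; case: (q %| k)%N; rewrite /= ?expr1 ?expr0 ?mul1r ?mulr1 -/a -/b; ring.
have zpq : zeta p ^+ p = 1 by apply/eqP; rewrite zeta_dvd.
have zqq : zeta q ^+ q = 1 by apply/eqP; rewrite zeta_dvd.
have dal : (p %| al)%N.
  rewrite -(Gauss_dvdl _ cop) -zeta_dvd //.
  have := congr1 (fun x => x ^+ q) c1; rewrite cE /= exprMn expr1n.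
  by rewrite (exprAC (zeta q)) zqq expr1n mulr1 -exprM => ->.
have dbe : (q %| be)%N.
  have cop' : coprime q p by rewrite coprime_sym.
  rewrite -(Gauss_dvdl _ cop') -zeta_dvd //.
  have := congr1 (fun x => x ^+ p) c1; rewrite cE /= exprMn expr1n.
  by rewrite (exprAC (zeta p)) zpq expr1n mul1r -exprM => ->.
have alp : (al < p)%N.
  rewrite /al; move: ha; case: (p %| k)%N => /=.
    by rewrite add1n -ltn_predRL.
  by move/eqP ->.
have beq : (be < q)%N.
  rewrite /be; move: hb; case: (q %| k)%N => /=.
    by rewrite add1n -ltn_predRL.
  by move/eqP ->.
have al0 : al = 0%N by apply/eqP; move: dal; rewrite /dvdn modn_small.
have be0 : be = 0%N by apply/eqP; move: dbe; rewrite /dvdn modn_small.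
move/eqP: al0; rewrite /al addn_eq0 eqb0 => /andP [P0 A0].
move/eqP: be0; rewrite /be addn_eq0 eqb0 => /andP [Q0 B0].
by move: nog; rewrite P0 Q0 A0 B0.
Qed.

Lemma memInv v : (v \in InvSp p q sigma0) = [forall t, ~~ one_good p q t ==> (v t == 0)].
Proof.
rewrite /InvSp memvE; apply/subv_bigcapP/forallP => [H t | H h _].
  have := H (Ordinal pq1) isT.
  rewrite -memvE memv_ker add_lfunE opp_lfunE id_lfunE phicheckE subr_eq0.
  move=> /eqP /ffunP /(_ t); rewrite phicheck_funE /= => e.
  apply/implyP => ng; have := cf_bad _ ng.
  apply: contraR => vt0; apply/eqP; apply: (mulIf vt0); rewrite mul1r; exact: e.
rewrite -memvE memv_ker add_lfunE opp_lfunE id_lfunE phicheckE subr_eq0.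
apply/eqP/ffunP => t; rewrite phicheck_funE.
case: (boolP (one_good p q t)) => og; first by rewrite cf_good // mul1r.
by move/implyP: (H t) => /(_ og) /eqP ->; rewrite mulr0.
Qed.

Definition Xs := [seq bvec p q t | t <- enum [pred t : dual_idx p q | one_good p q t]].

Lemma bvecE t s : bvec p q t s = (s == t)%:R.
Proof. by rewrite ffunE. Qed.

Lemma span_eq : InvSp p q sigma0 = <<Xs>>%VS.
Proof.
apply/eqP; rewrite eqEsubv; apply/andP; split.
  apply/subvP => v; rewrite memInv => /forallP H.
  have vE : v = \sum_(t | one_good p q t) v t *: bvec p q t.
    apply/ffunP => s; rewrite sum_ffunE.
    under eq_bigr => t _ do rewrite ffunE bvecE.
    case: (boolP (one_good p q s)) => og.
      rewrite (bigD1 s) //= eqxx big1 ?addr0; first by rewrite /GRing.scale /= mulr1.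
      move=> t /andP [_ ts]; rewrite eq_sym (negPf ts).
      by rewrite /GRing.scale /= mulr0.
    rewrite big1; first by move/implyP: (H s) => /(_ og) /eqP ->.
    move=> t ot; have -> : (s == t) = false by apply/eqP => st; rewrite st ot in og.
    by rewrite /GRing.scale /= mulr0.
  rewrite vE; apply: memv_suml => t og; apply: memvZ; apply: memv_span.
  by apply: map_f; rewrite mem_enum.
apply/span_subvP => x /mapP [t]; rewrite mem_enum inE => og ->.
rewrite memInv; apply/forallP => s; apply/implyP => ns; rewrite bvecE.
by have -> : (s == t) = false by apply/eqP => st; rewrite st og in ns.
Qed.

Lemma free_bvec (s : seq (dual_idx p q)) : uniq s -> free (map (bvec p q) s).
Proof.
elim: s => [|t s IH] /=; first by rewrite nil_free.
move=> /andP [ts us]; rewrite free_cons IH // andbT.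
apply/negP => tin.
have sub : (<<map (bvec p q) s>> <= lker (linfun (evf p q t)))%VS.
  apply/span_subvP => x /mapP [t' t's ->]; rewrite memv_ker lfunE /= /evf bvecE.
  have -> : (t == t') = false by apply/eqP => e; rewrite e t's in ts.
  by [].
by have := subvP sub _ tin; rewrite memv_ker lfunE /= /evf bvecE eqxx oner_eq0.
Qed.

Lemma dim_Inv : \dim (InvSp p q sigma0) = #|[pred t : dual_idx p q | one_good p q t]|.
Proof.
rewrite span_eq; have /eqP -> := free_bvec _ (enum_uniq [pred t : dual_idx p q | one_good p q t]).
by rewrite size_map cardE.
Qed.

Lemma mod1_aux (d M g : nat) : (1 < d)%N -> (d %| M)%N -> (0 < M)%N ->
  (d %| (g + M).-1)%N = (g %% d == 1)%N.
Proof.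
move=> d1 dM M0.
have gM : (1 <= g + M)%N by rewrite addn_gt0 M0 orbT.
rewrite -subn1 -eqn_mod_dvd // (modn_small d1).
have -> : ((g + M) %% d)%N = (g %% d)%N.
  by rewrite -modnDmr (eqP dM) addn0.
by [].
Qed.

Lemma good_mod g : good p q g = ((g %% p != 1) && (g %% q != 1))%N.
Proof.
rewrite /good (dvd_aux p g (p * q) (dvdn_mulr q (dvdnn p)) pq0).
rewrite (dvd_aux q g (p * q) (dvdn_mull p (dvdnn q)) pq0).
rewrite !mod1_aux //; first by apply: dvdn_mull.
by apply: dvdn_mulr.
Qed.

Lemma mon_ok00 k : mon_ok p q k 0 0.
Proof.
by rewrite /mon_ok; case: ifP => _; case: ifP => _; rewrite /= ?ltn_predRL ?hp ?hq.
Qed.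

Definition crt (g : 'I_(p * q)) : 'I_p * 'I_q :=
  (Ordinal (ltn_pmod g p0), Ordinal (ltn_pmod g q0)).

Lemma crt_inj : injective crt.
Proof.
move=> x y /(congr1 (fun z : 'I_p * 'I_q => (val z.1, val z.2))) /= [ex ey].
apply: val_inj => /=.
have : (x == y %[mod p * q])%N by rewrite chinese_remainder // ex ey !eqxx.
by rewrite !modn_small // => /eqP.
Qed.

Lemma crt_bij : bijective crt.
Proof.
apply: inj_card_bij; first exact: crt_inj.
by rewrite card_prod !card_ord.
Qed.

Lemma card_good : #|[set g : 'I_(p * q) | good p q g]| = ((p - 1) * (q - 1))%N.
Proof.
pose o1p : 'I_p := Ordinal hp; pose o1q : 'I_q := Ordinal hq.
have -> : [set g : 'I_(p * q) | good p q g] = crt @^-1: setX [set~ o1p] [set~ o1q].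
  apply/setP => g; rewrite !inE good_mod.
  by rewrite -!(inj_eq val_inj) /=.
rewrite on_card_preimset; last by apply: onW_bij; exact: crt_bij.
by rewrite cardsX !cardsC1 !card_ord !subn1.
Qed.

Lemma card_one_good : #|[pred t : dual_idx p q | one_good p q t]| = ((p - 1) * (q - 1))%N.
Proof.
rewrite -card_good.
have -> : #|[pred t : dual_idx p q | one_good p q t]| = #|[set t : dual_idx p q | one_good p q t]|.
  by apply: eq_card => t; rewrite !inE.
pose fs := fun t : dual_idx p q => (val t).1.
have inj : {in [set t : dual_idx p q | one_good p q t] &, injective fs}.
  move=> [[g1 [a1 b1]] H1] [[g2 [a2 b2]] H2]; rewrite !inE /one_good /da /db /fs /=.
  move=> /and3P [_ /eqP A1 /eqP B1] /and3P [_ /eqP A2 /eqP B2] e.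
  apply: val_inj => /=; congr pair => //; congr pair; apply: val_inj => /=.
    by rewrite A1 A2.
  by rewrite B1 B2.
rewrite -(card_in_imset inj); apply: eq_card => g; rewrite [in RHS]inE.
apply/imsetP/idP.
  by move=> [t]; rewrite inE => /and3P [gt _ _] ->.
move=> gg.
exists (exist _ (g, (Ordinal p0, Ordinal q0)) (mon_ok00 (gjinv p q g)) : dual_idx p q) => //.
by rewrite inE /one_good /dsector /da /db /= gg.
Qed.

Lemma uuE i : good p q i -> uu p i = uval p i /\ vv q i = uval q i.
Proof.
rewrite good_mod => /andP [hi1 hi2]; split; [exact: uu_gen | exact: uu_gen].
Qed.

Lemma bideg_t t : one_good p q t ->
  dual_bideg p q t =
   (- mdeg p q (p - uu p (dsector p q t)) (q - vv q (dsector p q t)),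
      mdeg p q (p - uu p (dsector p q t)) (q - vv q (dsector p q t))).
Proof.
move=> og; have := og; move/and3P => [gg /eqP da0 /eqP db0].
set g := dsector p q t in gg *.
have [uE vE] := uuE _ gg.
move: (gg); rewrite good_mod => /andP [g1 g2].
have kp : ((gjinv p q g %% p).+1 = uval p g)%N.
  rewrite /gjinv modn_dvdm ?dvdn_mulr // predmod ?addn_gt0 ?pq0 ?orbT //.
    by rewrite /uval addnC mulnC modnMDl.
  by rewrite addnC mulnC modnMDl.
have kq : ((gjinv p q g %% q).+1 = uval q g)%N.
  rewrite /gjinv modn_dvdm ?dvdn_mull // predmod ?addn_gt0 ?pq0 ?orbT //.
    by rewrite /uval addnC modnMDl.
  by rewrite addnC modnMDl.
rewrite /dual_bideg da0 db0 -/g uE vE.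
rewrite /sh /shbar /dd /mdeg !big_mkcond !big_ord_recl !big_ord0 /nu /wt /ex /=.
rewrite big_mkcond !big_ord_recl !big_ord0 /=.
have [/andP [U2 Up] _ _] := uval_prop _ _ hp g1.
have [/andP [V2 Vq] _ _] := uval_prop _ _ hq g2.
have ekp : (gjinv p q g %% p)%:R = (uval p g)%:R - 1 :> rat.
  by rewrite -kp -addn1 natrD addrK.
have ekq : (gjinv p q g %% q)%:R = (uval q g)%:R - 1 :> rat.
  by rewrite -kq -addn1 natrD addrK.
have P0 : p%:R != 0 :> rat by rewrite pnatr_eq0 -lt0n.
have Q0 : q%:R != 0 :> rat by rewrite pnatr_eq0 -lt0n.
have nzp : ((uval p g)%:R - 1) / p%:R != 0 :> rat.
  rewrite mulf_neq0 ?invr_eq0 // subr_eq0 pnatr_eq1; by apply/eqP => e; rewrite e in U2.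
have nzq : ((uval q g)%:R - 1) / q%:R != 0 :> rat.
  rewrite mulf_neq0 ?invr_eq0 // subr_eq0 pnatr_eq1; by apply/eqP => e; rewrite e in V2.
rewrite ekp ekq nzp nzq !natrB //.
congr (_, _); field; by rewrite P0 Q0.
Qed.

Lemma partA (i : 'I_(p * q)) : good p q i ->
  [/\ (2 <= uu p i <= p)%N, uu p i = i %[mod p],
      (2 <= vv q i <= q)%N & vv q i = i %[mod q]].
Proof.
move=> gi; have [uE vE] := uuE _ gi; move: gi; rewrite good_mod => /andP [g1 g2].
have [A B _] := uval_prop _ _ hp g1; have [C D _] := uval_prop _ _ hq g2.
by rewrite uE vE; split.
Qed.

Lemma partB (i : 'I_(p * q)) : good p q i -> mon_ok p q 0 (p - uu p i) (q - vv q i).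
Proof.
move=> /partA [/andP [A1 A2] _ /andP [C1 C2] _].
rewrite /mon_ok fixed0 fixed1 !dvdn0 /=; apply/andP; split; lia.
Qed.

Lemma partC : {in [pred i : 'I_(p * q) | good p q i] &,
         injective (fun i : 'I_(p * q) => (p - uu p i, q - vv q i)%N)}.
Proof.
move=> i j; rewrite !inE => gi gj [e1 e2].
have [/andP [A1 A2] B /andP [C1 C2] D] := partA _ gi.
have [/andP [A1' A2'] B' /andP [C1' C2'] D'] := partA _ gj.
have eu : uu p i = uu p j by clear -e1 A2 A2'; lia.
have ev : vv q i = vv q j by clear -e2 C2 C2'; lia.
apply: crt_inj; rewrite /crt; congr pair; apply: val_inj => /=.
  by rewrite -B -B' eu.
by rewrite -D -D' ev.
Qed.

Lemma partD (a b : nat) : mon_ok p q 0 a b ->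
  exists2 i : 'I_(p * q), good p q i & (p - uu p i, q - vv q i)%N = (a, b).
Proof.
rewrite /mon_ok fixed0 fixed1 !dvdn0 /= => /andP [ha hb].
have [ca ua] := target _ _ hp ha; have [cb ub] := target _ _ hq hb.
have [g gK Kg] := crt_bij.
pose x : 'I_p * 'I_q := (Ordinal (ltn_pmod (p - a) p0), Ordinal (ltn_pmod (q - b) q0)).
have hx := Kg x.
have ip : (g x %% p = (p - a) %% p)%N by move: hx => /(congr1 (fun z => val z.1)).
have iq : (g x %% q = (q - b) %% q)%N by move: hx => /(congr1 (fun z => val z.2)).
have gi : good p q (g x) by rewrite good_mod ip iq ca cb.
exists (g x) => //.
have [uE vE] := uuE _ gi.
rewrite uE vE (uval_mod _ _ _ ip) (uval_mod _ _ _ iq) ua ub.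
congr pair; [clear -ha; lia | clear -hb; lia].
Qed.


End S2.

Theorem mainTheorem11 (p q : nat) :
  (2 <= p)%N -> (2 <= q)%N -> coprime p q ->
  let sigma := fun _ : 'I_(p * q) => false in
  [/\ \dim (InvSp p q sigma) = ((p - 1) * (q - 1))%N &
      InvSp p q sigma =
        <<[seq bvec p q t | t <- enum [pred t : dual_idx p q | one_good p q t]]>>%VS] /\
  [/\ (forall i : 'I_(p * q), good p q i ->
         [/\ (2 <= uu p i <= p)%N, uu p i = i %[mod p],
             (2 <= vv q i <= q)%N & vv q i = i %[mod q]]),
      (forall i : 'I_(p * q), good p q i -> mon_ok p q 0 (p - uu p i) (q - vv q i)),
      {in [pred i : 'I_(p * q) | good p q i] &,
         injective (fun i : 'I_(p * q) => (p - uu p i, q - vv q i)%N)},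
      (forall a b : nat, mon_ok p q 0 a b ->
         exists2 i : 'I_(p * q), good p q i & (p - uu p i, q - vv q i)%N = (a, b)) &
      (forall t : dual_idx p q, one_good p q t ->
         dual_bideg p q t =
           (- mdeg p q (p - uu p (dsector p q t)) (q - vv q (dsector p q t)),
              mdeg p q (p - uu p (dsector p q t)) (q - vv q (dsector p q t))))].

Proof.
move=> hp hq cop sigma.
have e : InvSp p q sigma = InvSp p q (sigma0 p q) by [].
split; first split.
- by rewrite e dim_Inv // card_one_good.
- by rewrite e span_eq.
split.
- exact: partA.
- exact: partB.
- exact: partC.
- exact: partD.
- exact: bideg_t.
Qed.
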